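(* Let $G$ be a graph with nonnegative edge costs, distinguished vertices $start$ and $goal$, and let $C^*$ be the cost of a cheapest $start$–$goal$ path. Let $h_F, h_B$ be nonnegative front-to-end heuristics that are admissible and consistent. Fix $W \ge 1$ and a real $\lambda \le W$. Then the algorithm WBAE* (described in the context) is bounded-suboptimal: whenever it returns a solution, its cost is at most $W\cdot C^*$.
   Context: $c(x,y)$ is the cheapest path cost from $x$ to $y$. $h_F(s)$ estimates $c(s,goal)$, $h_B(s)$ estimates $c(start,s)$; admissibility means $h_F(s)\le c(s,goal)$, $h_B(s)\le c(start,s)$ for all $s$; consistency means $h_F(s)\le c(s,s')+h_F(s')$ and $h_B(s')\le c(s,s')+h_B(s)$ for all $s,s'$. WBAE* is a bidirectional best-first search: a forward search from $start$ with open list $\mathrm{OPEN}_F$ and $g_F$-values (costs of discovered paths from $start$), and a backward search from $goal$ with open list $\mathrm{OPEN}_B$ and $g_B$-values (costs of discovered paths to $goal$). For direction $D$ with opposite $\bar D$, a node $n$ in $\mathrm{OPEN}_D$ has priority $b_{W_D}(n) = g_D(n) + W\cdot h_D(n) + \lambda\,(g_D(n) - h_{\bar D}(n))$. An incumbent solution cost $U$ (initially $\infty$) is updated whenever a generated node is matched with the opposite frontier, giving a $start$–$goal$ path of cost lower than $U$. In each iteration a direction $D$ is chosen (e.g. alternating), a node with minimal $b_{W_D}$ in $\mathrm{OPEN}_D$ is expanded, and the lower bound $LB_{WB} = (b_W\mathrm{Min}_F + b_W\mathrm{Min}_B)/2$ is recomputed, where $b_W\mathrm{Min}_D$ is the minimal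 $b_{W_D}$-value in $\mathrm{OPEN}_D$. The algorithm terminates and returns $U$ once $U \le LB_{WB}$ (with $U$ the cost of a path found through a state on both frontiers). *)

(* Defs.v *)
(* Model of the WBAE* bidirectional search as a
   nondeterministic transition system over a finite directed graph. *)
From HB Require Import structures.
From mathcomp Require Import all_boot all_order all_algebra.
Set Implicit Arguments. Unset Strict Implicit. Unset Printing Implicit Defensive.
Import Order.TTheory GRing.Theory Num.Theory.
Local Open Scope ring_scope.

Section WBAE.
Variables (R : realFieldType) (T : finType).
(* directed graph: edge relation e, edge costs w (only meaningful on edges) *)
Variables (e : rel T) (w : T -> T -> R).
Variables (start goal : T).
Variables (hF hB : T -> R) (W lam : R).

Fixpoint pcost (x : T) (p : seq T) : R :=
  if p is y :: p' then w x y + pcost y p' else 0.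

Definition is_path (x y : T) (p : seq T) : Prop :=
  path e x p /\ last x p = y.

(* c(x,y) is the infimum of pcost over paths; comparisons with c are
   written by quantifying over all paths (c = +oo if no path). *)
Definition nonneg_costs : Prop := forall x y, e x y -> 0 <= w x y.

Definition admissible : Prop :=
  (forall s p, is_path s goal p -> hF s <= pcost s p) /\
  (forall s p, is_path start s p -> hB s <= pcost start p).

Definition consistent : Prop :=
  (forall s s' p, is_path s s' p -> hF s <= pcost s p + hF s') /\
  (forall s s' p, is_path s s' p -> hB s' <= pcost s p + hB s).

(* directions: true = forward, false = backward *)
Definition succ (D : bool) (n m : T) : bool := if D then e n m else e m n.
Definition wt (D : bool) (n m : T) : R := if D then w n m else w m n.
Definition h (D : bool) : T -> R := if D then hF else hB.

Record state := St {
  g : bool -> T -> R;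
  op : bool -> {set T};
  cl : bool -> {set T};
  U : option R                 (* incumbent; None = +oo *)
}.

Definition omin (a : option R) (x : R) : option R :=
  if a is Some u then Some (Num.min u x) else Some x.

Definition ole (a b : option R) : bool :=
  match a, b with
  | _, None => true
  | None, Some _ => false
  | Some x, Some y => x <= y
  end.

Definition bW (s : state) (D : bool) (n : T) : R :=
  g s D n + W * h D n + lam * (g s D n - h (~~ D) n).

(* initial state; start and goal are generated and, if start = goal,
   immediately matched, giving U = 0 *)
Definition init : state :=
  St (fun _ _ => 0)
     (fun D => if D then [set start] else [set goal])
     (fun _ => set0)
     (if start == goal then Some 0 else None).

Definition expand (s : state) (D : bool) (n : T) : state :=
  let gn := g s D n in
  let I := [set m | succ D n m &&
             ((m \notin op s D :|: cl s D) || (gn + wt D n m < g s D m))] in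
  St (fun D' m => if (D' == D) && (m \in I) then gn + wt D n m else g s D' m)
     (fun D' => if D' == D then (op s D :\ n) :|: I else op s D')
     (fun D' => if D' == D then (cl s D :|: [set n]) :\: I else cl s D')
     (foldr (fun m acc => if succ D n m && (m \in op s (~~ D))
                          then omin acc (gn + wt D n m + g s (~~ D) m)
                          else acc) (U s) (enum T)).

(* termination test U <= LB_WB = (bWMin_F + bWMin_B)/2 (min over empty = +oo) *)
Definition terminated (s : state) : Prop :=
  op s true = set0 \/ op s false = set0 \/
  exists nF nB, [/\ nF \in op s true, nB \in op s false,
    (forall m, m \in op s true -> bW s true nF <= bW s true m),
    (forall m, m \in op s false -> bW s false nB <= bW s false m) &
    ole (U s) (Some ((bW s true nF + bW s false nB) / 2))].

(* states reachable by running WBAE* with an arbitrary direction-choice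
   policy and arbitrary tie-breaking *)
Inductive reach : state -> Prop :=
| reach_init : reach init
| reach_step s D n : reach s -> ~ terminated s -> n \in op s D ->
    (forall m, m \in op s D -> bW s D n <= bW s D m) ->
    reach (expand s D n).

End WBAE.

(* Main.v *)
Require Import Defs.
From HB Require Import structures.
From mathcomp Require Import all_boot all_order all_algebra.
From mathcomp Require Import lra.
Import Order.TTheory GRing.Theory Num.Theory.
Set Implicit Arguments. Unset Strict Implicit. Unset Printing Implicit Defensive.
Local Open Scope ring_scope.

Lemma ole_refl (R : realFieldType) (a : option R) : ole a a.
Proof. by case: a => //= x; exact: lexx. Qed.

Lemma ole_trans (R : realFieldType) (a b c : option R) :
  ole a b -> ole b c -> ole a c.
Proof.
case: a => [x|]; case: b => [y|]; case: c => [z|] //=.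
exact: le_trans.
Qed.

Lemma ole_omin1 (R : realFieldType) (a : option R) x : ole (omin a x) a.
Proof. by case: a => //= u; rewrite ge_min lexx. Qed.

Lemma ole_omin2 (R : realFieldType) (a : option R) x : ole (omin a x) (Some x).
Proof. by case: a => /= [u|]; rewrite ?ge_min lexx ?orbT. Qed.

Lemma ole_mono (R : realFieldType) (a : option R) x y :
  ole a (Some x) -> x <= y -> ole a (Some y).
Proof. by move=> H1 H2; apply: ole_trans H1 _; rewrite /=. Qed.

Lemma pcost_cat (R : realFieldType) (T : finType) (w : T -> T -> R) x p1 p2 :
  pcost w x (p1 ++ p2) = pcost w x p1 + pcost w (last x p1) p2.
Proof.
elim: p1 x => [|y p1 IH] x /=; first by rewrite add0r.
by rewrite IH addrA.
Qed.

Lemma pcost_ge0 (R : realFieldType) (T : finType) (e : rel T) (w : T -> T -> R) x p :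
  nonneg_costs e w -> path e x p -> 0 <= pcost w x p.
Proof.
move=> Hw; elim: p x => [|y p IH] x /=; first by rewrite lexx.
move=> /andP[Hxy Hp]; apply: addr_ge0; [exact: Hw | exact: IH].
Qed.

Definition fr (R : realFieldType) (T : finType) (s : state R T) D := op s D :|: cl s D.

Definition Iset (R : realFieldType) (T : finType) (e : rel T) (w : T -> T -> R)
  (s : state R T) D n0 :=
  [set m | succ e D n0 m &&
     ((m \notin op s D :|: cl s D) || (g s D n0 + wt w D n0 m < g s D m))].

Lemma fr_expand (R : realFieldType) (T : finType) (e : rel T) (w : T -> T -> R)
  (s : state R T) D n0 D' m : n0 \in op s D ->
  (m \in fr (expand e w s D n0) D') =
  (m \in fr s D') || ((D' == D) && (m \in Iset e w s D n0)).
Proof.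
move=> Hn0; rewrite /fr /expand /=.
case: (D' =P D) => [->|ne]; last by rewrite orbF.
rewrite /Iset !inE /=.
case: (m =P n0) => [->|_]; first rewrite Hn0.
  by move: (succ e D n0 n0) (g s D n0 + wt w D n0 n0 < g s D n0) (n0 \in cl s D) => [] [] [].
by move: (succ e D n0 m) (g s D n0 + wt w D n0 m < g s D m) (m \in op s D) (m \in cl s D) => [] [] [] [].
Qed.

Lemma cl_expand (R : realFieldType) (T : finType) (e : rel T) (w : T -> T -> R)
  (s : state R T) D n0 D' m :
  (m \in cl (expand e w s D n0) D') =
  if D' == D then ((m \in cl s D) || (m == n0)) && (m \notin Iset e w s D n0)
  else m \in cl s D'.
Proof.
rewrite /expand /=; case: (D' == D) => //.
by rewrite /Iset !inE andbC.
Qed.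

Lemma g_expand (R : realFieldType) (T : finType) (e : rel T) (w : T -> T -> R)
  (s : state R T) D n0 D' m :
  g (expand e w s D n0) D' m =
  if (D' == D) && (m \in Iset e w s D n0) then g s D n0 + wt w D n0 m else g s D' m.
Proof. by []. Qed.

Lemma U_expand (R : realFieldType) (T : finType) (e : rel T) (w : T -> T -> R)
  (s : state R T) D n0 :
  ole (U (expand e w s D n0)) (U s) /\
  (forall m, succ e D n0 m -> m \in op s (~~ D) ->
     ole (U (expand e w s D n0)) (Some (g s D n0 + wt w D n0 m + g s (~~ D) m))).
Proof.
rewrite /expand /=.
have: forall m, m \in enum T by move=> m; rewrite mem_enum.
elim: (enum T) => [|x l IH] Hl.
  by split=> [|m]; [exact: ole_refl | move: (Hl m); rewrite in_nil].
have [IH1 IH2] : ole (foldr (fun m acc => if succ e D n0 m && (m \in op s (~~ D))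
                          then omin acc (g s D n0 + wt w D n0 m + g s (~~ D) m)
                          else acc) (U s) l) (U s) /\
    (forall m, m \in l -> succ e D n0 m -> m \in op s (~~ D) ->
     ole (foldr (fun m acc => if succ e D n0 m && (m \in op s (~~ D))
                          then omin acc (g s D n0 + wt w D n0 m + g s (~~ D) m)
                          else acc) (U s) l) (Some (g s D n0 + wt w D n0 m + g s (~~ D) m))).
  clear Hl; elim: l {IH} => [|y l [IHa IHb]] /=.
    by split=> [|m //]; exact: ole_refl.
  case: ifP => Hc.
    split; first exact: ole_trans (ole_omin1 _ _) IHa.
    move=> m; rewrite in_cons => /orP[/eqP->|Hm] H1 H2; first exact: ole_omin2.
    by apply: ole_trans (ole_omin1 _ _) _; apply: IHb.
  split=> // m; rewrite in_cons => /orP[/eqP->|Hm] H1 H2; last exact: IHb.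
  by rewrite H1 H2 in Hc.
split=> /=.
  by case: ifP => _ //; exact: ole_trans (ole_omin1 _ _) IH1.
move=> m H1 H2; case: ifP => Hc.
  have := Hl m; rewrite in_cons => /orP[/eqP->|Hm]; first exact: ole_omin2.
  by apply: ole_trans (ole_omin1 _ _) _; apply: IH2.
have := Hl m; rewrite in_cons => /orP[/eqP Hm|Hm]; last exact: IH2.
by subst m; rewrite H1 H2 in Hc.
Qed.

Definition Inv (R : realFieldType) (T : finType) (e : rel T) (w : T -> T -> R)
  (start goal : T) (s : state R T) : Prop :=
  [/\ (forall D n m, n \in cl s D -> succ e D n m ->
         m \in fr s D /\ g s D m <= g s D n + wt w D n m),
      ((start \in fr s true /\ g s true start <= 0) /\
       (goal \in fr s false /\ g s false goal <= 0)),
      (forall n, n \in fr s true -> exists q, is_path e start n q /\ pcost w start q <= g s true n),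
      (forall n, n \in fr s false -> exists q, is_path e n goal q /\ pcost w n q <= g s false n) &
      (forall n, n \in fr s true -> n \in fr s false ->
         ole (U s) (Some (g s true n + g s false n)))].

Lemma Inv_init (R : realFieldType) (T : finType) (e : rel T) (w : T -> T -> R)
  (start goal : T) : Inv e w start goal (init R start goal).
Proof.
rewrite /Inv /init /fr /=; split.
- by move=> D n m; rewrite in_set0.
- by rewrite !inE !eqxx lexx.
- move=> n; rewrite !inE orbF => /eqP->; exists [::]; split=> //; by rewrite lexx.
- move=> n; rewrite !inE orbF => /eqP->; exists [::]; split=> //; by rewrite lexx.
- move=> n; rewrite !inE !orbF => /eqP-> /eqP->; rewrite eqxx /= addr0 lexx //.
Qed.

Lemma Gle (R : realFieldType) (T : finType) (e : rel T) (w : T -> T -> R)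
  (s : state R T) D n0 D' m : m \in fr s D' ->
  g (expand e w s D n0) D' m <= g s D' m.
Proof.
move=> Hm; rewrite g_expand; case: ifP => [/andP[/eqP E HI]|_]; last exact: lexx.
subst D'; move: HI; rewrite /Iset inE => /andP[_ /orP[Hn|Hlt]]; last exact: ltW.
by move: Hm; rewrite /fr (negbTE Hn).
Qed.

Lemma Inv_expand (R : realFieldType) (T : finType) (e : rel T) (w : T -> T -> R)
  (start goal : T) (s : state R T) D n0 :
  nonneg_costs e w -> Inv e w start goal s -> n0 \in op s D ->
  Inv e w start goal (expand e w s D n0).
Proof.
move=> Hw [I1 [[I2a I2b] [I2c I2d]] I3 I4 I5] Hn0.
have Hn0f : n0 \in fr s D by rewrite /fr inE Hn0.
have [U1 U2] := U_expand e w s D n0.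
split.
- move=> D' n m; case: (D' =P D) => [->{D'}|ne]; last first.
    have neb : (D' == D) = false by apply/eqP.
    rewrite cl_expand neb => Hn Hs.
    have [H1 H2] := I1 _ _ _ Hn Hs.
    by rewrite fr_expand // neb orbF H1 !g_expand neb.
  rewrite cl_expand eqxx => /andP[Hn HnI] Hs.
  have gn : g (expand e w s D n0) D n = g s D n by rewrite g_expand eqxx (negbTE HnI).
  rewrite gn.
  case HmI: (m \in Iset e w s D n0).
    rewrite fr_expand // eqxx HmI orbT; split=> //.
    rewrite g_expand eqxx HmI /=.
    case/orP: Hn => [Hn|/eqP->]; last exact: lexx.
    have [H1 H2] := I1 _ _ _ Hn Hs.
    move: HmI; rewrite /Iset inE => /andP[_ /orP[Hn'|Hlt]].
      by move: H1; rewrite /fr (negbTE Hn').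
    exact: le_trans (ltW Hlt) H2.
  rewrite g_expand eqxx HmI /=.
  case/orP: Hn => [Hn|/eqP En].
    have [H1 H2] := I1 _ _ _ Hn Hs.
    by rewrite fr_expand // H1.
  subst n; move: HmI; rewrite /Iset inE Hs /= => /negbT; rewrite negb_or negbK.
  move=> /andP[H1 H2]; rewrite fr_expand // H1; split=> //.
  by rewrite leNgt.
- split; split; first by rewrite fr_expand // I2a.
  exact: le_trans (Gle _ _ _ _ I2a) I2b.
  by rewrite fr_expand // I2c.
  exact: le_trans (Gle _ _ _ _ I2c) I2d.
- move=> n; rewrite fr_expand // g_expand.
  case HI: ((true == D) && (n \in Iset e w s D n0)) => /=; last by rewrite orbF => /I3.
  move=> _; move: HI => /andP[/eqP ED HI]; subst D.
  have [q [[Hq Hl] Hc]] := I3 _ Hn0f.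
  move: HI; rewrite /Iset inE => /andP[Hs _].
  exists (rcons q n); split; first split.
  + by rewrite rcons_path Hq Hl.
  + by rewrite last_rcons.
  rewrite -cats1 pcost_cat /= Hl addr0.
  by rewrite lerD2r.
- move=> n; rewrite fr_expand // g_expand.
  case HI: ((false == D) && (n \in Iset e w s D n0)) => /=; last by rewrite orbF => /I4.
  move=> _; move: HI => /andP[/eqP ED HI]; subst D.
  have [q [[Hq Hl] Hc]] := I4 _ Hn0f.
  move: HI; rewrite /Iset inE => /andP[Hs _].
  exists (n0 :: q); split; first split.
  + by rewrite /= Hq andbT.
  + by [].
  by rewrite /= addrC lerD2r.
- move=> n; rewrite !fr_expand // !g_expand.
  case: D Hn0 Hn0f U1 U2 => Hn0 Hn0f U1 U2 /=.
  + case HI: (n \in Iset e w s true n0) => /=; rewrite ?orbF => Ht Hf.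
      move: HI; rewrite /Iset inE => /andP[Hs _].
      case Ho: (n \in op s false); first exact: U2.
      have Hc : n \in cl s false by move: Hf; rewrite /fr inE Ho.
      have [H1 H2] := I1 false n n0 Hc Hs.
      apply: ole_trans U1 _; apply: ole_mono (I5 _ Hn0f H1) _.
      rewrite /= in H2; lra.
    exact: ole_trans U1 (I5 _ Ht Hf).
  + case HI: (n \in Iset e w s false n0) => /=; rewrite ?orbF => Ht Hf.
      move: HI; rewrite /Iset inE => /andP[Hs _].
      case Ho: (n \in op s true).
        apply: ole_mono (U2 _ Hs Ho) _; rewrite /=; lra.
      have Hc : n \in cl s true by move: Ht; rewrite /fr inE Ho.
      have [H1 H2] := I1 true n n0 Hc Hs.
      apply: ole_trans U1 _; apply: ole_mono (I5 _ H1 Hn0f) _.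
      rewrite /= in H2; lra.
    exact: ole_trans U1 (I5 _ Ht Hf).
Qed.

Lemma reach_Inv (R : realFieldType) (T : finType) (e : rel T) (w : T -> T -> R)
  (start goal : T) hF hB W lam s :
  nonneg_costs e w -> reach e w start goal hF hB W lam s -> Inv e w start goal s.
Proof.
move=> Hw; elim=> [|s' D n _ IH _ Hn _]; first exact: Inv_init.
exact: Inv_expand.
Qed.

Lemma bwalk (R : realFieldType) (T : finType) (e : rel T) (w : T -> T -> R)
  (start goal : T) (s : state R T) :
  Inv e w start goal s -> forall q z, path e z q -> last z q = goal ->
  (exists r1 r2, q = r1 ++ r2 /\ last z r1 \in op s false /\
      g s false (last z r1) <= pcost w (last z r1) r2) \/
  (z \in fr s false /\ g s false z <= pcost w z q).
Proof.
move=> [I1 [_ [I2c I2d]] _ _ _]; elim=> [|y q IH] z /=.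
  by move=> _ ->; right.
move=> /andP[Hzy Hq] Hl; case: (IH y Hq Hl) => [[r1 [r2 [E [H1 H2]]]]|[H1 H2]].
  by left; exists (y :: r1), r2; rewrite E.
case Ho: (y \in op s false).
  by left; exists [:: y], q.
have Hc : y \in cl s false by move: H1; rewrite /fr inE Ho.
have [H3 H4] := I1 false y z Hc Hzy.
right; split=> //; rewrite /= in H4; lra.
Qed.

Lemma fwalk (R : realFieldType) (T : finType) (e : rel T) (w : T -> T -> R)
  (start goal : T) (s : state R T) :
  Inv e w start goal s -> forall q x a, path e x q -> last x q = goal ->
  x \in fr s true -> g s true x <= a ->
  (exists r1 r2, q = r1 ++ r2 /\ last x r1 \in fr s true /\
      g s true (last x r1) <= a + pcost w x r1 /\
      last x r1 \in fr s false /\ g s false (last x r1) <= pcost w (last x r1) r2) \/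
  (exists r1 r2 r3, q = r1 ++ r2 ++ r3 /\ last x r1 \in op s true /\
      g s true (last x r1) <= a + pcost w x r1 /\
      last (last x r1) r2 \in op s false /\
      g s false (last (last x r1) r2) <= pcost w (last (last x r1) r2) r3).
Proof.
move=> HI; have HI' := HI; move: HI' => [I1 [_ [I2c I2d]] _ _ _].
elim=> [|y q IH] x a Hp Hl Hx Ha.
  case Ho: (x \in op s true).
    left; exists [::], [::]; rewrite /= addr0; do !split=> //.
      by move: Hl => /= ->.
    by move: Hl => /= ->.
  left; exists [::], [::]; rewrite /= addr0; do !split=> //.
    by move: Hl => /= ->.
  by move: Hl => /= ->.
case Ho: (x \in op s true).
  case: (bwalk HI Hp Hl) => [[r1 [r2 [E [H1 H2]]]]|[H1 H2]].
    by right; exists [::], r1, r2; rewrite /= addr0 E.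
  by left; exists [::], (y :: q); rewrite /= addr0.
have Hc : x \in cl s true by move: Hx; rewrite /fr inE Ho.
move: Hp => /= /andP[Hxy Hq].
have [H3 H4] := I1 true x y Hc Hxy.
have Ha' : g s true y <= a + w x y by rewrite /= in H4; lra.
case: (IH y (a + w x y) Hq Hl H3 Ha') => [[r1 [r2 [E [H5 [H6 H7]]]]]|[r1 [r2 [r3 [E [H5 [H6 H7]]]]]]].
  left; exists (y :: r1), r2; rewrite E /= addrA; do !split=> //.
right; exists (y :: r1), r2, r3; rewrite E /= addrA; do !split=> //.
Qed.

Lemma alg (R : realFieldType) (W lam gF gB hFx hFy hBx hBy P1 m P3 : R) :
  1 <= W -> lam <= W -> 0 <= P1 -> 0 <= m -> 0 <= P3 -> gF <= P1 -> gB <= P3 ->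
  hFx <= m + hFy -> hBy <= m + hBx -> hFy <= gB -> hBx <= gF ->
  (gF + W * hFx + lam * (gF - hBx)) + (gB + W * hBy + lam * (gB - hFy))
    <= 2 * (W * (P1 + m + P3)).
Proof.
move=> HW Hl H1 H2 H3 H4 H5 H6 H7 H8 H9.
have A1 : W * hFx <= W * (m + hFy) by apply: ler_wpM2l => //; lra.
have A2 : W * hBy <= W * (m + hBx) by apply: ler_wpM2l => //; lra.
have A3 : (W - lam) * (hFy + hBx) <= (W - lam) * (gB + gF) by apply: ler_wpM2l; lra.
have A4 : (1 + W) * (gF + gB) <= (1 + W) * (P1 + P3) by apply: ler_wpM2l; lra.
have A5 : (W - 1) * m <= (W - 1) * (P1 + m + P3) by apply: ler_wpM2l; lra.
nra.
Qed.

Theorem theorem2 (R : realFieldType) (T : finType) (e : rel T) (w : T -> T -> R)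
  (start goal : T) (hF hB : T -> R) (W lam : R) :
  nonneg_costs e w ->
  (forall s, 0 <= hF s) -> (forall s, 0 <= hB s) ->
  admissible e w start goal hF hB ->
  consistent e w hF hB ->
  1 <= W -> lam <= W ->
  forall (s : state R T) (u : R),
    reach e w start goal hF hB W lam s ->
    terminated hF hB W lam s ->
    U s = Some u ->
    forall p : seq T, is_path e start goal p -> u <= W * pcost w start p.
Proof.
move=> Hw _ _ [Ad1 Ad2] [Co1 Co2] HW Hl s u Hr Ht HU p [Hp Hlp].
have HI := reach_Inv Hw Hr.
have HI' := HI; move: HI' => [_ [[I2a I2b] _] I3 I4 I5].
have HC0 : 0 <= pcost w start p by exact: pcost_ge0 Hw Hp.
case: (fwalk HI Hp Hlp I2a I2b) =>
  [[r1 [r2 [E [H1 [H2 [H3 H4]]]]]]|[r1 [r2 [r3 [E [H1 [H2 [H3 H4]]]]]]]].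
  have := I5 _ H1 H3; rewrite HU /= => Hu.
  have Hc : pcost w start p = pcost w start r1 + pcost w (last start r1) r2
    by rewrite E pcost_cat.
  have : u <= pcost w start p by rewrite Hc; lra.
  move=> Hup; apply: le_trans Hup _.
  have : 0 <= (W - 1) * pcost w start p by apply: mulr_ge0; lra.
  lra.
set xo := last start r1 in H1 H2 H3 H4.
set yo := last xo r2 in H3 H4.
have Hop1 : xo \in fr s true by rewrite /fr inE H1.
have Hop2 : yo \in fr s false by rewrite /fr inE H3.
move: Hp; rewrite E cat_path => /andP[Hp1]; rewrite -/xo cat_path => /andP[Hp2 Hp3].
rewrite -/yo in Hp3.
have Hl3 : last yo r3 = goal by move: Hlp; rewrite E !last_cat.
have Hc : pcost w start (r1 ++ r2 ++ r3) =
  pcost w start r1 + pcost w xo r2 + pcost w yo r3 by rewrite !pcost_cat addrA.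
rewrite Hc.
have P1 := pcost_ge0 Hw Hp1.
have P2 := pcost_ge0 Hw Hp2.
have P3 := pcost_ge0 Hw Hp3.
have C1 := Co1 xo yo r2 (conj Hp2 erefl).
have C2 := Co2 xo yo r2 (conj Hp2 erefl).
have [qy [Hqy Hqyc]] := I4 _ Hop2.
have [qx [Hqx Hqxc]] := I3 _ Hop1.
have A1 := Ad1 _ _ Hqy.
have A2 := Ad2 _ _ Hqx.
have Hbnd := alg HW Hl P1 P2 P3 (ltac:(lra) : g s true xo <= pcost w start r1) H4 C1 C2
   (le_trans A1 Hqyc) (le_trans A2 Hqxc).
case: Ht => [Ho|[Ho|[nF [nB [HnF HnB MF MB Hole]]]]].
- by move: H1; rewrite Ho in_set0.
- by move: H3; rewrite Ho in_set0.
rewrite HU /= in Hole.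
have M1 := MF _ H1.
have M2 := MB _ H3.
rewrite /bW /= in M1 M2 Hbnd Hole.
lra.
Qed.
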